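(* Fix $i,j\in I$ with $\tau(i)=i\neq j$. For any $m,n\in\mathbb{N}$ there exists a uniquely determined polynomial $w_{m,n}(x,y)=\sum_{r,s}b_{rs}x^ry^s\in\mathbb{K}[x,y]$ such that, in $\mathcal{A}$, $$F_i^mF_jF_i^n=\sum_{r,s}b_{rs}\,F_i^{\circledast r}\circledast F_j\circledast F_i^{\circledast s},$$ where the left side is the product in the free algebra $T(V^-)$ and $F_i^{\circledast r}$ is the $r$-th power with respect to $\circledast$.
   Context: Let $I$ be a finite set and $(a_{kl})_{k,l\in I}$ a symmetrizable generalized Cartan matrix, with relatively prime positive integers $d_k$ such that $(d_ka_{kl})$ is symmetric. Let $Q=\bigoplus_{k\in I}\mathbb{Z}\alpha_k$ with symmetric bilinear form $(\alpha_k,\alpha_l)=d_ka_{kl}$ and $Q^+=\bigoplus_k\mathbb{N}\alpha_k$. Let $\mathbb{K}$ be a field of characteristic zero, $q\in\mathbb{K}^\times$ with $q^{2d_k}\neq1$ for all $k$, and $q_k=q^{d_k}$. Let $\tau:I\to I$ be a bijection with $\tau^2=\mathrm{id}$ and $a_{\tau(k)\tau(l)}=a_{kl}$, and let $(c_k)_{k\in I}\in(\mathbb{K}^\times)^I$ with $c_k=c_{\tau(k)}$ whenever $a_{k\tau(k)}=0$. Let $T(V^-)=\mathbb{K}\langle F_k:k\in I\rangle$ be the free algebra, graded by $-Q^+$ with $F_k$ of degree $-\alpha_k$. Let $\partial_k^L,\partial_k^R:T(V^-)\to T(V^-)$ be the linear maps with $\partial_k^L(F_l)=\partial_k^R(F_l)=\delta_{kl}$,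 $\partial_k^L(1)=\partial_k^R(1)=0$, and, for $f$ of degree $-\mu$ and $g$ of degree $-\nu$, $\partial_k^R(fg)=q^{(\alpha_k,\nu)}\partial_k^R(f)g+f\partial_k^R(g)$, $\partial_k^L(fg)=\partial_k^L(f)g+q^{(\alpha_k,\mu)}f\partial_k^L(g)$. Let $G_\theta\subseteq Q$ be the subgroup generated by $\alpha_k-\alpha_{\tau(k)}$, $k\in I$, and let $\mathcal{A}=H_\theta\ltimes T(V^-)$ be the $\mathbb{K}$-algebra generated by $T(V^-)$ and elements $K_\mu$ ($\mu\in G_\theta$) subject to $K_0=1$, $K_\mu K_\nu=K_{\mu+\nu}$, $K_\mu F_k=q^{-(\mu,\alpha_k)}F_kK_\mu$; write $K_{\tau(k)}K_k^{-1}=K_{\alpha_{\tau(k)}-\alpha_k}$ and let $H_\theta=\mathrm{span}\{K_\mu\}$. By earlier work there is a unique associative product $\circledast$ on $\mathcal{A}$ with $h\circledast g=hg$, $g\circledast h=gh$ for $h\in H_\theta$, $g\in T(V^-)$, and $F_k\circledast g=F_kg-\frac{c_kq^{(\alpha_k,\alpha_{\tau(k)})}}{q_k-q_k^{-1}}K_{\tau(k)}K_k^{-1}\partial^L_{\tau(k)}(g)$ for all $k\in I$, $g\in T(V^-)$. *)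

(* Defs.v *)
From HB Require Import structures.
From mathcomp Require Import all_boot all_order all_algebra.
From mathcomp Require Import finmap.
From mathcomp Require Import monalg.

Set Implicit Arguments.
Unset Strict Implicit.
Unset Printing Implicit Defensive.

Import Order.TTheory GRing.Theory Num.Theory.
Local Open Scope ring_scope.

Section QuantumSymmetricPair.

Variables (I : finType) (K : fieldType).

(* root lattice Q = Z^I, alpha_k the simple roots *)
Definition rootQ := {ffun I -> int}.
Definition alpha (k : I) : rootQ := [ffun l => (l == k)%:Z].

(* weight of a word F_{k1} ... F_{kn} is -(alpha_k1 + ... + alpha_kn);
   we record alpha_k1 + ... + alpha_kn *)
Definition wt (w : seq I) : rootQ := \sum_(k <- w) alpha k.

(* The underlying vector space of H_Q ⋉ T(V^-): basis K_mu F_w indexed by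
   (mu, w) in Q x (words in I).  T(V^-) = span of K_0 F_w,
   H_theta = span of K_mu, mu in G_theta. *)
Definition algA := {malg K[(rootQ * seq I)%type]}.

Definition basisA (mu : rootQ) (w : seq I) : algA := << (mu, w) >>.

Definition oneA : algA := basisA 0 [::].
Definition Fgen (k : I) : algA := basisA 0 [:: k].
Definition Kel (mu : rootQ) : algA := basisA mu [::].

Variables (a : I -> I -> int) (d : I -> nat) (q : K).

Definition form (mu nu : rootQ) : int :=
  \sum_(k : I) \sum_(l : I) mu k * nu l * ((d k)%:Z * a k l).

(* the algebra product of A: K_mu u * K_nu v = q^{(nu, wt u)} K_{mu+nu} u v,
   coming from K_nu F_k = q^{-(nu, alpha_k)} F_k K_nu *)
Definition mulAlg (x y : algA) : algA :=
  \sum_(u <- msupp x) \sum_(v <- msupp y)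
     (x@_u * y@_v * q ^ form v.1 (wt u.2)) *: basisA (u.1 + v.1) (u.2 ++ v.2).

Definition powAlg (x : algA) (n : nat) : algA := iter n (mulAlg x) oneA.

Definition inT (g : algA) : Prop := forall x, x \in msupp g -> x.1 = 0.

Definition inGtheta (tau : I -> I) (mu : rootQ) : Prop :=
  exists z : I -> int, mu = \sum_(k : I) (alpha k - alpha (tau k)) *~ z k.

Definition inH (tau : I -> I) (h : algA) : Prop :=
  forall x, x \in msupp h -> x.2 = [::] /\ inGtheta tau x.1.

Fixpoint dLword (k : I) (w : seq I) : algA :=
  match w with
  | [::] => 0
  | l :: w' => (k == l)%:R *: basisA 0 w'
               + q ^ form (alpha k) (alpha l) *: mulAlg (Fgen l) (dLword k w')
  end.

Definition dL (k : I) (g : algA) : algA :=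
  \sum_(x <- msupp g) g@_x *: dLword k x.2.

Definition starpow (star : algA -> algA -> algA) (x : algA) (n : nat) : algA :=
  iter n (star x) oneA.

End QuantumSymmetricPair.

Definition sym_GCM (I : finType) (a : I -> I -> int) (d : I -> nat) : Prop :=
  [/\ forall k, a k k = 2,
      forall k l, k != l -> a k l <= 0,
      forall k l, (a k l = 0 <-> a l k = 0),
      (forall k, (0 < d k)%N) /\
        (forall k l, (d k)%:Z * a k l = (d l)%:Z * a l k)
    & \big[gcdn/0%N]_(k : I) d k = 1%N].

Definition is_star_product (I : finType) (K : fieldType) (a : I -> I -> int)
    (d : I -> nat) (q : K) (tau : I -> I) (c : I -> K)
    (star : algA I K -> algA I K -> algA I K) : Prop :=
  [/\
      forall (s : K) x y z, star (s *: x + y) z = s *: star x z + star y z,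
      forall (s : K) x y z, star x (s *: y + z) = s *: star x y + star x z,
      associative star,
      forall h g, inH tau h -> inT g ->
        star h g = mulAlg a d q h g /\ star g h = mulAlg a d q g h
    &
      forall k g, inT g ->
        star (Fgen K k) g =
          mulAlg a d q (Fgen K k) g
          - (c k * q ^ form a d (alpha k) (alpha (tau k))
               / (q ^+ d k - (q ^+ d k)^-1))
            *: mulAlg a d q (Kel K (alpha (tau k) - alpha k)) (dL a d q (tau k) g)].

(* Main.v *)
Require Import Defs.
From HB Require Import structures.
From mathcomp Require Import all_boot all_order all_algebra.
From mathcomp Require Import finmap.
From mathcomp Require Import monalg zify.

Set Implicit Arguments.
Unset Strict Implicit.
Unset Printing Implicit Defensive.
Import Order.TTheory GRing.Theory Num.Theory.
Local Open Scope ring_scope.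

Section Aux.
Variables (I : finType) (K : fieldType) (a : I -> I -> int) (d : I -> nat) (q : K).

Local Notation A := (algA I K).
Local Notation key := (rootQ I * seq I)%type.
Local Notation mul := (mulAlg a d q).
Local Notation B := (basisA K).

Lemma dform0l nu : Defs.form a d 0 nu = 0.
Proof. by rewrite /Defs.form big1 // => k _; rewrite big1 // => l _; rewrite ffunE !mul0r. Qed.

Lemma dform0r nu : Defs.form a d nu 0 = 0.
Proof. by rewrite /Defs.form big1 // => k _; rewrite big1 // => l _; rewrite ffunE mulr0 mul0r. Qed.

Lemma scaleU (x : K) (k : key) : x *: (<< k >> : A) = << x *g k >>.
Proof.
apply/malgP => k'; rewrite mcoeffZ !mcoeffU.
by case: eqP; rewrite ?mulr1n ?mulr0n ?mulr1 ?mulr0.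
Qed.

Lemma mul_basis_l mu u (y : A) : mul (B mu u) y =
  \sum_(v <- msupp y) (y@_v * q ^ Defs.form a d v.1 (wt u)) *: B (mu + v.1) (u ++ v.2).
Proof.
rewrite /mulAlg /basisA msuppU oner_eq0 big_seq_fset1 mcoeffUU.
by apply: eq_bigr => v _; rewrite mul1r.
Qed.

Lemma coef_sum (y : A) (cf : key -> K) (f : key -> key) k k0 :
  (forall v, (f v == k) = (v == k0)) ->
  (\sum_(v <- msupp y) (y@_v * cf v) *: (<< f v >> : A))@_k = y@_k0 * cf k0.
Proof.
move=> Hf; rewrite raddf_sum /=.
have := congr1 (mcoeff k0) (monalgE y); rewrite raddf_sum /= => ->.
rewrite mulr_suml; apply: eq_bigr => v _.
rewrite mcoeffZ !mcoeffU Hf; case: eqP => [->|_];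
  by rewrite ?mulr1n ?mulr0n ?mulr1 ?mulr0 ?mul0r.
Qed.

Lemma coef_sum0 (y : A) (cf : key -> K) (f : key -> key) k :
  (forall v, f v != k) ->
  (\sum_(v <- msupp y) (y@_v * cf v) *: (<< f v >> : A))@_k = 0.
Proof.
move=> Hf; rewrite raddf_sum /= big1 // => v _.
by rewrite mcoeffZ mcoeffU (negbTE (Hf v)) mulr0n mulr0.
Qed.

Lemma mulF_cons l (y : A) mu w :
  (mul (Fgen K l) y)@_(mu, l :: w) = y@_(mu, w) * q ^ Defs.form a d mu (wt [:: l]).
Proof.
rewrite mul_basis_l (@coef_sum y (fun v => q ^ Defs.form a d v.1 (wt [:: l]))
   (fun v => (0 + v.1, [:: l] ++ v.2)) _ (mu, w)) //.
by case=> m1 w1; rewrite /= !xpair_eqE add0r eqseq_cons eqxx.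
Qed.

Lemma mulF_other l (y : A) k :
  (forall mu w, k != (mu, l :: w)) -> (mul (Fgen K l) y)@_k = 0.
Proof.
move=> Hk; rewrite mul_basis_l coef_sum0 // => v; rewrite eq_sym.
exact: Hk.
Qed.

Lemma mul_one (y : A) : mul (B 0 [::]) y = y.
Proof.
rewrite mul_basis_l; apply/malgP => k.
rewrite (@coef_sum y _ (fun v => (0 + v.1, [::] ++ v.2)) _ k).
  by rewrite /wt big_nil dform0r expr0z mulr1.
by case=> m1 w1; rewrite /= add0r.
Qed.

Lemma mul_x0 (x : A) : mul x 0 = 0.
Proof. by rewrite /mulAlg msupp0 big1 // => u _; rewrite big_seq_fset0. Qed.

Lemma mul_basis u v : mul (B 0 u) (B 0 v) = B 0 (u ++ v).
Proof.
rewrite mul_basis_l {1}/basisA msuppU oner_eq0 big_seq_fset1 mcoeffUU /=.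
by rewrite dform0l expr0z mulr1 scale1r addr0.
Qed.

Definition supp (P : key -> Prop) (g : A) := forall k, g@_k != 0 -> P k.

Lemma supp0 P : supp P 0.
Proof. by move=> k; rewrite mcoeff0 eqxx. Qed.

Lemma suppD P x y : supp P x -> supp P y -> supp P (x + y).
Proof.
move=> Hx Hy k; rewrite mcoeffD; case: (eqVneq (x@_k) 0) => [->|/Hx //].
by rewrite add0r => /Hy.
Qed.

Lemma suppZ P s x : supp P x -> supp P (s *: x).
Proof. by move=> Hx k; rewrite mcoeffZ mulf_eq0 negb_or => /andP[_ /Hx]. Qed.

Lemma suppB P x y : supp P x -> supp P y -> supp P (x - y).
Proof.
move=> Hx Hy; apply: suppD => // k; rewrite mcoeffN oppr_eq0; exact: Hy.
Qed.

Lemma supp_mono (P Q : key -> Prop) x : (forall k, P k -> Q k) -> supp P x -> supp Q x.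
Proof. by move=> H Hx k /Hx /H. Qed.

Lemma supp_sum (T : eqType) P (s : seq T) (F : T -> A) :
  (forall v, v \in s -> supp P (F v)) -> supp P (\sum_(v <- s) F v).
Proof.
elim: s => [|x s IH] H; first by rewrite big_nil; exact: supp0.
rewrite big_cons; apply: suppD; first by apply: H; rewrite mem_head.
by apply: IH => v hv; apply: H; rewrite inE hv orbT.
Qed.

Lemma supp_U (P : key -> Prop) k0 : P k0 -> supp P (<< k0 >>).
Proof. by move=> H k; rewrite mcoeffU; case: (eqVneq k0 k) => [<-//|_]; rewrite mulr0n eqxx. Qed.

Lemma supp_coef0 P g k : supp P g -> ~ P k -> g@_k = 0.
Proof. by move=> H nP; case: (eqVneq (g@_k) 0) => // /H. Qed.

Lemma mulF_supp (P Q : key -> Prop) l y :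
  supp P y -> (forall mu w, P (mu, w) -> Q (mu, l :: w)) -> supp Q (mul (Fgen K l) y).
Proof.
move=> Hy HPQ [mu [|l' w]].
  by rewrite mulF_other ?eqxx // => m1 w1; rewrite xpair_eqE andbF.
case: (eqVneq l' l) => [->|ne].
  by rewrite mulF_cons mulf_eq0 negb_or => /andP[/Hy /HPQ].
rewrite mulF_other ?eqxx // => m1 w1; rewrite xpair_eqE eqseq_cons (negbTE ne).
by rewrite andbF.
Qed.

Lemma supp_dL P k g :
  (forall x, g@_x != 0 -> supp P (dLword a d q k x.2)) -> supp P (dL a d q k g).
Proof.
move=> H; apply: supp_sum => x.
rewrite -mcoeff_neq0 => /H; exact: suppZ.
Qed.

Lemma dL_zero k g :
  (forall x, g@_x != 0 -> dLword a d q k x.2 = 0) -> dL a d q k g = 0.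
Proof.
move=> H; rewrite /dL big1_seq // => x /andP[_]; rewrite -mcoeff_neq0 => /H ->.
by rewrite scaler0.
Qed.

Lemma dLword_cons k l w : dLword a d q k (l :: w) =
  (k == l)%:R *: B 0 w + q ^ Defs.form a d (alpha k) (alpha l) *: mul (Fgen K l) (dLword a d q k w).
Proof. by []. Qed.

End Aux.

Section Main.
Variables (I : finType) (K : fieldType) (a : I -> I -> int) (d : I -> nat) (q : K).
Variables (tau : I -> I) (c : I -> K) (star : algA I K -> algA I K -> algA I K) (i j : I).
Hypothesis Hstar : is_star_product a d q tau c star.
Hypothesis Hti : tau i = i.
Hypothesis Hij : i != j.
Hypothesis Htt : forall k, tau (tau k) = k.

Local Notation A := (algA I K).
Local Notation key := (rootQ I * seq I)%type.
Local Notation mul := (mulAlg a d q).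
Local Notation B := (basisA K).
Local Notation supp := (@supp I K).

Definition w_ (x y : nat) : seq I := nseq x i ++ j :: nseq y i.

Definition ilow (n : nat) (k : key) := exists c0, (c0 < n)%N /\ k = (0, nseq c0 i).
Definition low (n : nat) (k : key) := exists x y, (x + y < n)%N /\ k = (0, w_ x y).
Definition E1 (s : nat) (k : key) := k = (0, nseq s i) \/ ilow s k.
Definition E2 (r s : nat) (k : key) := k = (0, w_ r s) \/ low (r + s) k.

Lemma Htj : tau j != i.
Proof. by apply/eqP => h; move/eqP: Hij; apply; rewrite -[RHS]Htt h Hti. Qed.

Lemma size_w x y : size (w_ x y) = (x + y).+1.
Proof. by rewrite /w_ size_cat size_nseq /= size_nseq addnS. Qed.

Lemma w_inj x y x' y' : w_ x y = w_ x' y' -> x = x' /\ y = y'.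
Proof.
move=> h.
have hi : forall u v, index j (w_ u v) = u.
  move=> u v; rewrite /w_ index_cat mem_nseq eq_sym (negbTE Hij) andbF.
  by rewrite size_nseq /= eqxx addn0.
have ex : x = x' by rewrite -(hi x y) -(hi x' y') h.
split=> //; move/(congr1 size): h; rewrite !size_w ex; lia.
Qed.

Lemma D1 n : supp (ilow n) (dLword a d q i (nseq n i)).
Proof.
elim: n => [|n IH]; first exact: supp0.
rewrite dLword_cons; apply: suppD; apply: suppZ.
  by apply: supp_U; exists n.
apply: mulF_supp IH _ => mu w [c0 [lt [-> ->]]].
by exists c0.+1.
Qed.

Lemma D2 x y : supp (low (x + y)) (dLword a d q i (w_ x y)).
Proof.
elim: x => [|x IH].
  rewrite dLword_cons (negbTE Hij) scale0r add0r; apply: suppZ.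
  apply: mulF_supp (D1 (n:=y)) _ => mu w [c0 [lt [-> ->]]].
  by exists 0%N, c0.
rewrite dLword_cons; apply: suppD; apply: suppZ.
  by apply: supp_U; exists x, y; split => //; rewrite addSn.
apply: mulF_supp IH _ => mu w [x' [y' [lt [-> ->]]]].
by exists x'.+1, y'; split => //; rewrite addSn.
Qed.

Lemma D3 n : dLword a d q (tau j) (nseq n i) = 0.
Proof.
elim: n => [|n IH] //.
by rewrite dLword_cons (negbTE Htj) scale0r add0r IH mul_x0 scaler0.
Qed.

Definition Cst := c i * q ^ Defs.form a d (alpha i) (alpha i) / (q ^+ d i - (q ^+ d i)^-1).

Lemma inT_of (P : key -> Prop) g : supp P g -> (forall k, P k -> k.1 = 0) -> inT g.
Proof. by move=> Hs HP x; rewrite -mcoeff_neq0 => /Hs /HP. Qed.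

Lemma inH_one : inH tau (B 0 [::]).
Proof.
move=> x; rewrite /basisA msuppU oner_eq0 in_fset1 => /eqP -> /=; split=> //.
by exists (fun=> 0); rewrite big1 // => k _; rewrite mulr0z.
Qed.

Lemma star_one_l g : inT g -> star (B 0 [::]) g = g.
Proof.
case: Hstar => _ _ _ Hhg _ Hg.
by case: (Hhg _ _ inH_one Hg) => -> _; rewrite mul_one.
Qed.

Lemma star_Fi g : inT g -> star (Fgen K i) g = mul (Fgen K i) g - Cst *: dL a d q i g.
Proof.
case: Hstar => _ _ _ _ HF Hg.
rewrite (HF i g Hg) Hti (subrr (alpha i)) mul_one /Cst.
reflexivity.
Qed.

Lemma star_Fj g : inT g -> dL a d q (tau j) g = 0 -> star (Fgen K j) g = mul (Fgen K j) g.
Proof.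
case: Hstar => _ _ _ _ HF Hg H0.
rewrite (HF j g Hg) H0 mul_x0 scaler0 subr0.
reflexivity.
Qed.

Definition Ys s := iter s (star (Fgen K i)) (B 0 [::]).

Lemma E1_T s k : E1 s k -> k.1 = 0.
Proof. by case=> [->|[c0 [_ ->]]]. Qed.

Lemma Ys_prop s : supp (E1 s) (Ys s) /\ (Ys s)@_(0, nseq s i) = 1.
Proof.
elim: s => [|s [IHs IHc]].
  split; last exact: mcoeffUU.
  by apply: supp_U; left.
have hT : inT (Ys s) := inT_of IHs (@E1_T s).
have hdL : supp (ilow s.+1) (dL a d q i (Ys s)).
  apply: supp_dL => x /IHs [->|[c0 [lt ->]]].
    by apply: supp_mono (D1 (n:=s)) => k [c1 [lt1 ->]]; exists c1; split => //; apply: ltnW.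
  apply: supp_mono (D1 (n:=c0)) => k [c1 [lt1 ->]]; exists c1; split => //.
  by apply: ltn_trans lt1 _; apply: ltnW.
rewrite /Ys /= -/(Ys s) star_Fi //; split.
  apply: suppB; last first.
    by apply: suppZ; apply: supp_mono hdL => k hk; right.
  apply: mulF_supp IHs _ => mu w [[-> ->]|[c0 [lt [-> ->]]]]; first by left.
  by right; exists c0.+1.
rewrite mcoeffB mcoeffZ (supp_coef0 hdL); last first.
  case=> c0 [lt [] /(congr1 size) /=]; rewrite !size_nseq => h.
  lia.
rewrite mulr0 subr0 /= mulF_cons IHc dform0l expr0z mulr1.
by [].
Qed.

Definition G s := star (Fgen K j) (Ys s).

Lemma G_prop s : supp (E2 0 s) (G s) /\ (G s)@_(0, w_ 0 s) = 1.
Proof.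
case: (Ys_prop s) => Hs Hc.
have hT : inT (Ys s) := inT_of Hs (@E1_T s).
rewrite /G star_Fj //; last first.
  by apply: dL_zero => x /Hs [->|[c0 [_ ->]]]; apply: D3.
split.
  apply: mulF_supp Hs _ => mu w [[-> ->]|[c0 [lt [-> ->]]]]; first by left.
  by right; exists 0%N, c0.
by rewrite /w_ /= mulF_cons Hc dform0l expr0z mulr1.
Qed.

Definition Z r s := iter r (star (Fgen K i)) (G s).

Lemma E2_T r s k : E2 r s k -> k.1 = 0.
Proof. by case=> [->|[x [y [_ ->]]]]. Qed.

Lemma Z_prop r s : supp (E2 r s) (Z r s) /\ (Z r s)@_(0, w_ r s) = 1.
Proof.
elim: r => [|r [IHs IHc]]; first exact: G_prop.
have hT : inT (Z r s) := inT_of IHs (@E2_T r s).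
have hdL : supp (low (r.+1 + s)) (dL a d q i (Z r s)).
  apply: supp_dL => x /IHs [->|[x' [y' [lt ->]]]].
    apply: supp_mono (D2 (x:=r) (y:=s)) => k [x1 [y1 [lt1 ->]]]; exists x1, y1; split => //.
    by apply: (leq_trans lt1); rewrite addSn.
  apply: supp_mono (D2 (x:=x') (y:=y')) => k [x1 [y1 [lt1 ->]]]; exists x1, y1; split => //.
  by apply: (ltn_trans lt1); apply: (leq_trans lt); rewrite addSn.
rewrite /Z /= -/(Z r s) star_Fi //; split.
  apply: suppB; last first.
    by apply: suppZ; apply: supp_mono hdL => k hk; right.
  apply: mulF_supp IHs _ => mu w [[-> ->]|[x' [y' [lt [-> ->]]]]]; first by left.
  by right; exists x'.+1, y'; split => //; rewrite addSn.
rewrite mcoeffB mcoeffZ (supp_coef0 hdL); last first.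
  case=> x' [y' [lt [] /(congr1 size)]]; rewrite !size_w => h.
  move: lt; rewrite -h; lia.
by rewrite mulr0 subr0 /= mulF_cons IHc dform0l expr0z mulr1.
Qed.

Definition X r s := star (star (starpow star (Fgen K i) r) (Fgen K j)) (starpow star (Fgen K i) s).

Lemma star_pow_l r g : inT g -> star (starpow star (Fgen K i) r) g = iter r (star (Fgen K i)) g.
Proof.
case: Hstar => _ _ Hassoc _ _ Hg.
elim: r => [|r IH]; first exact: star_one_l.
by rewrite /starpow /= -Hassoc -/(starpow star (Fgen K i) r) IH.
Qed.

Lemma X_Z r s : X r s = Z r s.
Proof.
case: Hstar => _ _ Hassoc _ _.
rewrite /X -Hassoc star_pow_l //.
by case: (G_prop s) => Hs _; apply: inT_of Hs (@E2_T 0 s).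
Qed.


Lemma sum_dirac (V : zmodType) (x : V) M s : (s < M)%N ->
  \sum_(s' < M) (if (s' : nat) == s then x else 0) = x.
Proof.
move=> hs; rewrite (bigD1 (Ordinal hs)) //= eqxx big1 ?addr0 // => s' ne.
case: eqP => // e; case/eqP: ne; exact: val_inj.
Qed.

Lemma Xcoef r' s' r s : (r' + s' <= r + s)%N ->
  (X r' s')@_(0, w_ r s) = if (r' == r) && (s' == s) then 1 else 0.
Proof.
move=> hle; rewrite X_Z; case: (Z_prop r' s') => Hs Hc.
case: ifP => [/andP[/eqP e1 /eqP e2]| ne]; first by rewrite -e1 -e2.
apply: (supp_coef0 Hs); case=> [[] /w_inj [e1 e2]|[x [y [lt [] /(congr1 size)]]]].
  by rewrite e1 e2 !eqxx in ne.
rewrite !size_w => h; lia.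
Qed.

Lemma indep M (cf : nat -> nat -> K) :
  \sum_(r < M) \sum_(s < M) cf r s *: X r s = 0 ->
  forall r s, (r < M)%N -> (s < M)%N -> cf r s = 0.
Proof.
move=> H0.
suff Ht : forall t r s, (r < M)%N -> (s < M)%N -> (M + M <= r + s + t)%N -> cf r s = 0.
  by move=> r s hr hs; apply: (Ht (M + M)) => //; apply: leq_addl.
elim=> [|t IH] r s hr hs ht; first by exfalso; lia.
have := congr1 (mcoeff (0, w_ r s)) H0; rewrite mcoeff0 raddf_sum /=.
rewrite (eq_bigr (fun r' : 'I_M => if (r' : nat) == r then cf r s else 0)).
  by rewrite sum_dirac.
move=> r' _; rewrite raddf_sum /=.
rewrite (eq_bigr (fun s' : 'I_M => if (r' : nat) == r then (if (s' : nat) == s then cf r s else 0) else 0)).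
  by case: eqP => _; [rewrite sum_dirac | rewrite big1].
move=> s' _; rewrite mcoeffZ.
case: (leqP (r' + s') (r + s)) => hrs.
  rewrite Xcoef //; case: eqP => [->|_]; case: eqP => [->|_]; by rewrite ?mulr1 ?mulr0.
rewrite (IH r' s') ?mul0r //; last by lia.
case: eqP => [e1|_] //; case: eqP => [e2|_] //; exfalso; lia.
Qed.

Definition span M (x : algA I K) :=
  exists cf : nat -> nat -> K, x = \sum_(r < M) \sum_(s < M) cf r s *: X r s.

Lemma span0 M : span M 0.
Proof.
exists (fun _ _ => 0); symmetry; rewrite big1 // => r _; rewrite big1 // => s _.
exact: scale0r.
Qed.

Lemma spanD M x y : span M x -> span M y -> span M (x + y).
Proof.
move=> [c1 ->] [c2 ->]; exists (fun r s => c1 r s + c2 r s).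
rewrite -big_split; apply: eq_bigr => r _; rewrite -big_split; apply: eq_bigr => s _.
by rewrite scalerDl.
Qed.

Lemma spanZ M (s0 : K) x : span M x -> span M (s0 *: x).
Proof.
move=> [c1 ->]; exists (fun r s => s0 * c1 r s).
rewrite scaler_sumr; apply: eq_bigr => r _; rewrite scaler_sumr; apply: eq_bigr => s _.
by rewrite scalerA.
Qed.

Lemma span_sum M (T : eqType) (sq : seq T) (F : T -> algA I K) :
  (forall v, v \in sq -> span M (F v)) -> span M (\sum_(v <- sq) F v).
Proof.
elim: sq => [|x sq IH] H; first by rewrite big_nil; exact: span0.
rewrite big_cons; apply: spanD; first by apply: H; rewrite mem_head.
by apply: IH => v hv; apply: H; rewrite inE hv orbT.
Qed.

Lemma spanX M r s : (r < M)%N -> (s < M)%N -> span M (X r s).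
Proof.
move=> hr hs; exists (fun r' s' => if (r' == r) && (s' == s) then 1 else 0).
symmetry.
rewrite (eq_bigr (fun r' : 'I_M => if (r' : nat) == r then X r s else 0)).
  by rewrite sum_dirac.
move=> r' _.
rewrite (eq_bigr (fun s' : 'I_M => if (r' : nat) == r then (if (s' : nat) == s then X r s else 0) else 0)).
  by case: eqP => _; [rewrite sum_dirac | rewrite big1].
move=> s' _; case: eqP => [->|_]; case: eqP => [->|_]; by rewrite ?scale1r ?scale0r.
Qed.

Definition W x y : algA I K := B 0 (w_ x y).

Lemma span_W N : forall n x y, (x + y)%N = n -> (n < N)%N -> span N (W x y).
Proof.
elim/ltn_ind => n IH x y exy hn.
set L := X x y - W x y.
have HL : supp (low (x + y)) L.
  move=> k; rewrite mcoeffB /W /basisA mcoeffU.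
  case: (eqVneq (0, w_ x y) k) => [<-|ne].
    by case: (Z_prop x y) => _ Hc; rewrite X_Z Hc mulr1n subrr eqxx.
  rewrite mulr0n subr0 X_Z; case: (Z_prop x y) => Hs _ /Hs [e|//].
  by rewrite e eqxx in ne.
have -> : W x y = X x y - L by rewrite /L opprB addrC subrK.
apply: spanD; first by apply: spanX; lia.
rewrite -scaleN1r; apply: spanZ.
rewrite (monalgE L); apply: span_sum => k; rewrite -mcoeff_neq0 => /HL [x' [y' [lt ->]]].
rewrite -scaleU; apply: spanZ; apply: (IH (x' + y')%N _ x' y'); lia.
Qed.

Lemma pow_basis m : powAlg a d q (Fgen K i) m = B 0 (nseq m i).
Proof.
elim: m => [|m IH]; first by [].
rewrite /powAlg iterS -/(powAlg a d q (Fgen K i) m) IH.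
exact: mul_basis.
Qed.

Lemma LHS_eq m n : mul (mul (powAlg a d q (Fgen K i) m) (Fgen K j)) (powAlg a d q (Fgen K i) n) = W m n.
Proof.
rewrite !pow_basis; change (Fgen K j) with (B 0 [:: j]).
rewrite mul_basis mul_basis -catA.
reflexivity.
Qed.

Lemma sum_widen (V : zmodType) (F : nat -> V) n M : (n <= M)%N ->
  (forall r, (n <= r)%N -> F r = 0) -> \sum_(r < n) F r = \sum_(r < M) F r.
Proof.
move=> le H; rewrite (big_ord_widen M F le) big_mkcond; apply: eq_bigr => r _.
by case: ifP => // /negbT; rewrite -leqNgt => /H ->.
Qed.

Lemma RHS_widen (p : {poly {poly K}}) M : (size p <= M)%N -> (forall r, (size (p`_r)%R <= M)%N) ->
  \sum_(r < size p) \sum_(s < size p`_r)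
        (p`_r)`_s *: star (star (starpow star (Fgen K i) r) (Fgen K j))
                          (starpow star (Fgen K i) s)
  = \sum_(r < M) \sum_(s < M) (p`_r)`_s *: X r s.
Proof.
move=> hp hpr.
rewrite (@sum_widen _ (fun r => \sum_(s < size p`_r) (p`_r)`_s *: X r s) (size p) M hp).
  apply: eq_bigr => r _; apply: (@sum_widen _ (fun s => (p`_r)`_s *: X r s)) => // s hs.
  by rewrite nth_default // scale0r.
by move=> r hr; rewrite nth_default // size_poly0 big_ord0.
Qed.

Lemma main_sec m n : exists! p : {poly {poly K}},
    mul (mul (powAlg a d q (Fgen K i) m) (Fgen K j)) (powAlg a d q (Fgen K i) n)
    = \sum_(r < size p) \sum_(s < size p`_r)
        (p`_r)`_s *: star (star (starpow star (Fgen K i) r) (Fgen K j))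
                          (starpow star (Fgen K i) s).
Proof.
pose N := (m + n).+1.
have [cf Hcf] := @span_W N (m + n)%N m n erefl (ltnSn _).
pose p : {poly {poly K}} := \poly_(r < N) \poly_(s < N) cf r s.
have hsp : (size p <= N)%N by apply: size_poly.
have hspr : forall r, (size (p`_r)%R <= N)%N.
  by move=> r; rewrite coef_poly; case: ifP => _; [apply: size_poly | rewrite size_poly0].
have Hlhs : mul (mul (powAlg a d q (Fgen K i) m) (Fgen K j)) (powAlg a d q (Fgen K i) n)
    = \sum_(r < size p) \sum_(s < size p`_r)
        (p`_r)`_s *: star (star (starpow star (Fgen K i) r) (Fgen K j))
                          (starpow star (Fgen K i) s).
  rewrite LHS_eq Hcf (RHS_widen hsp hspr).
  apply: eq_bigr => r _; apply: eq_bigr => s _.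
  by rewrite /p coef_poly ltn_ord coef_poly ltn_ord.
exists p; split; first exact: Hlhs.
move=> p' Hp'.
pose M := (N + size p' + \max_(r < size p') size (p'`_r)%R)%N.
have hpM : (size p <= M)%N by apply: (leq_trans hsp); rewrite /M -addnA leq_addr.
have hprM : forall r, (size (p`_r)%R <= M)%N.
  by move=> r; apply: (leq_trans (hspr r)); rewrite /M -addnA leq_addr.
have hp'M : (size p' <= M)%N by rewrite /M -addnA addnCA leq_addr.
have hp'rM : forall r, (size (p'`_r)%R <= M)%N.
  move=> r; case: (ltnP r (size p')) => h; last by rewrite nth_default // size_poly0.
  apply: (leq_trans (@leq_bigmax _ (fun r : 'I_(size p') => size p'`_r) (Ordinal h))).
  by rewrite /M leq_addl.
have eqM : \sum_(r < M) \sum_(s < M) (p`_r)`_s *: X r s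
         = \sum_(r < M) \sum_(s < M) (p'`_r)`_s *: X r s.
  by rewrite -(RHS_widen hpM hprM) -(RHS_widen hp'M hp'rM) -Hlhs -Hp'.
have H0 : \sum_(r < M) \sum_(s < M) ((p`_r)`_s - (p'`_r)`_s) *: X r s = 0.
  transitivity (\sum_(r < M) \sum_(s < M) (p`_r)`_s *: X r s
       - \sum_(r < M) \sum_(s < M) (p'`_r)`_s *: X r s); last by rewrite eqM subrr.
  rewrite -sumrB; apply: eq_bigr => r _; rewrite -sumrB; apply: eq_bigr => s _.
  exact: scalerBl.
have hc := @indep M (fun r s => (p`_r)`_s - (p'`_r)`_s) H0.
apply/polyP => r; apply/polyP => s.
case: (ltnP r M) => hr; last first.
  have -> : p`_r = 0 by apply: nth_default; apply: leq_trans hpM hr.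
  have -> : p'`_r = 0 by apply: nth_default; apply: leq_trans hp'M hr.
  by [].
case: (ltnP s M) => hs; last first.
  have h1 := leq_trans (hprM r) hs; have h2 := leq_trans (hp'rM r) hs.
  by rewrite (nth_default 0 h1) (nth_default 0 h2).
by apply/eqP; rewrite -subr_eq0; apply/eqP; apply: hc.
Qed.

End Main.

Theorem lemma4p7 (I : finType) (a : I -> I -> int) (d : I -> nat)
    (K : fieldType) (q : K) (tau : I -> I) (c : I -> K)
    (star : algA I K -> algA I K -> algA I K) (i j : I) (m n : nat) :
  sym_GCM a d ->
  [pchar K] =i pred0 ->
  q != 0 ->
  (forall k, q ^+ (2 * d k) != 1) ->
  (forall k, tau (tau k) = k) ->
  (forall k l, a (tau k) (tau l) = a k l) ->
  (forall k, c k != 0) ->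
  (forall k, a k (tau k) = 0 -> c k = c (tau k)) ->
  is_star_product a d q tau c star ->
  tau i = i -> i != j ->
  exists! p : {poly {poly K}},
    mulAlg a d q (mulAlg a d q (powAlg a d q (Fgen K i) m) (Fgen K j))
               (powAlg a d q (Fgen K i) n)
    = \sum_(r < size p) \sum_(s < size p`_r)
        (p`_r)`_s *: star (star (starpow star (Fgen K i) r) (Fgen K j))
                          (starpow star (Fgen K i) s).
Proof.
move=> _ _ _ _ Htt _ _ _ Hstar Hti Hij.
exact: (main_sec Hstar Hti Hij Htt).
Qed.
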